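(* Let $g:\Sigma^n\to\Sigma$ be an $n$-quasigroup, write $\Sigma=\{a,b,c,d\}$, and let $k$ be the first canonical parameter of the double-MDS-code $S=\{\bar x\in\Sigma^n:g(\bar x)\in\{a,b\}\}$. (a) If $1<k<n$, then $g$ is reducible. (b) If $k=n$, then $g$ is semilinear.
   Context: Let $\Sigma=\{0,1,2,3\}$, $[n]=\{1,\ldots,n\}$. An $i$-line of $\Sigma^n$ is a set of the four words that agree in all coordinates except the $i$th; a line is an $i$-line for some $i$. An $(n,2)_4$ MDS code is a set meeting every line in exactly one element. A double-code is a set meeting every line in $0$ or $2$ elements; a double-MDS-code is a set meeting every line in exactly $2$ elements; a double-code is complementable if contained in a double-MDS-code, and prime if complementable, nonempty and not partitionable into two or more nonempty double-codes. An $n$-quasigroup is a map $g:\Sigma^n\to\Sigma$ such that, for each $i$ and each fixing of the other arguments, $x_i\mapsto g(\bar x)$ is a bijection of $\Sigma$. $\chi_S$ denotes the characteristic function, $\oplus$ addition mod 2, and for $K=\{i_1<\cdots<i_m\}\subseteq[n]$, $\bar x_K=(x_{i_1},\ldots,x_{i_m})$. Canonical parameters: every double-MDS-code $S\subseteq\Sigma^n$ has a unique representation $\chi_S(\bar x)=\bigoplus_{j=1}^k\chi_{S_j}(\bar x_{K_j})\oplus\sigma_0$ with $k\in[n]$, $\{K_1,\ldots,K_k\}$ a partition of $[n]$ into nonempty sets, $S_j$ prime double-MDS-codes containing $\bar 0$, $\sigma_0\in\{0,1\}$. An $n$-quasigroup $g$ is reducible if there exist $k'$ with $2\le k'\le n-1$,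 a partition $\{L_1,\ldots,L_{k'}\}$ of $[n]$ into nonempty sets, a $k'$-quasigroup $f_0$ and $|L_j|$-quasigroups $f_j$ with $g(\bar x)=f_0(f_1(\bar x_{L_1}),\ldots,f_{k'}(\bar x_{L_{k'}}))$ (i.e. $g$ is a superposition of quasigroups of arity less than $n$). A double-MDS-code $D\subseteq\Sigma^m$ is linear if $\chi_D(y_1,\ldots,y_m)=\chi_1(y_1)\oplus\cdots\oplus\chi_m(y_m)$ for some $\chi_i:\Sigma\to\{0,1\}$; an MDS code is semilinear if contained in a linear double-MDS-code; an $n$-quasigroup $g$ is semilinear if the MDS code $\{(\bar x,g(\bar x)):\bar x\in\Sigma^n\}\subseteq\Sigma^{n+1}$ is semilinear. *)

(* Defs.v *)
From mathcomp Require Import all_boot.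
Set Implicit Arguments. Unset Strict Implicit. Unset Printing Implicit Defensive.

(* Sigma = {0,1,2,3} = 'I_4 ; words of Sigma^n *)
Definition word (n : nat) := {ffun 'I_n -> 'I_4}.

Definition line n (x : word n) (i : 'I_n) : {set word n} :=
  [set y : word n | [forall j, (j != i) ==> (y j == x j)]].

Definition MDS_code n (C : {set word n}) : Prop :=
  forall x i, #|line x i :&: C| = 1.
Definition double_code n (C : {set word n}) : Prop :=
  forall x i, #|line x i :&: C| = 0 \/ #|line x i :&: C| = 2.
Definition double_MDS_code n (C : {set word n}) : Prop :=
  forall x i, #|line x i :&: C| = 2.
Definition complementable n (C : {set word n}) : Prop :=
  exists D : {set word n}, double_MDS_code D /\ C \subset D.
Definition prime_code n (C : {set word n}) : Prop :=
  [/\ complementable C, C != set0 &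
      ~ exists P : {set {set word n}},
          [/\ partition P C, 2 <= #|P| &
              forall B, B \in P -> B != set0 /\ double_code B]].

Definition zero_word n : word n := [ffun => ord0].

(* x_K = (x_{i_1},...,x_{i_m}) for K = {i_1 < ... < i_m}
   (enum of a set of ordinals is increasing) *)
Definition restrict n (K : {set 'I_n}) (x : word n) : word #|K| :=
  [ffun j => x (enum_val j)].

Definition set_partition n k (K : 'I_k -> {set 'I_n}) : Prop :=
  [/\ forall j, K j != set0,
      forall j1 j2, j1 != j2 -> [disjoint K j1 & K j2] &
      forall i, exists j, i \in K j].

Definition canonical_rep n k (S : {set word n}) (K : 'I_k -> {set 'I_n})
    (Sj : forall j : 'I_k, {set word #|K j|}) (s0 : bool) : Prop :=
  [/\ 0 < k <= n, set_partition K,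
      forall j, [/\ double_MDS_code (Sj j), prime_code (Sj j)
                  & zero_word #|K j| \in Sj j] &
      forall x, (x \in S) = (\big[addb/false]_(j < k) (restrict (K j) x \in Sj j)) (+) s0].

Definition upd n (x : word n) (i : 'I_n) (v : 'I_4) : word n :=
  [ffun j => if j == i then v else x j].

Definition quasigroup n (g : word n -> 'I_4) : Prop :=
  forall (x : word n) (i : 'I_n), bijective (fun v => g (upd x i v)).

Definition reducible n (g : word n -> 'I_4) : Prop :=
  exists k' : nat, exists L : 'I_k' -> {set 'I_n},
  exists f0 : word k' -> 'I_4,
  exists f : forall j : 'I_k', word #|L j| -> 'I_4,
    [/\ 2 <= k' <= n.-1, set_partition L, quasigroup f0,
        forall j, quasigroup (f j) &
        forall x, g x = f0 [ffun j => f j (restrict (L j) x)]].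

Definition linear_double_MDS m (D : {set word m}) : Prop :=
  double_MDS_code D /\
  exists chi : 'I_m -> 'I_4 -> bool,
    forall y, (y \in D) = \big[addb/false]_(i < m) chi i (y i).

Definition semilinear_code m (C : {set word m}) : Prop :=
  MDS_code C /\ exists D, linear_double_MDS D /\ C \subset D.

Definition ext n (x : word n) (v : 'I_4) : word n.+1 :=
  [ffun i : 'I_n.+1 => if unlift ord_max i is Some j then x j else v].

Definition semilinear n (g : word n -> 'I_4) : Prop :=
  semilinear_code [set ext x (g x) | x : word n].

Arguments canonical_rep {n k} S K Sj s0.

(* Main.v *)
Require Import Defs.
From mathcomp Require Import all_boot zify.
Set Implicit Arguments. Unset Strict Implicit. Unset Printing Implicit Defensive.

Section Lines.
Variable m : nat.
Implicit Types (x y w : word m) (D : {set word m}).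

Lemma in_line x i y : (y \in line x i) = [forall j, (j != i) ==> (y j == x j)].
Proof. by rewrite inE. Qed.

Lemma line_sym x y i : (y \in line x i) = (x \in line y i).
Proof.
by rewrite !in_line; apply/forallP/forallP => H j; have := H j; case: (j != i) => //=; rewrite eq_sym.
Qed.

Lemma line_refl x i : x \in line x i.
Proof. by rewrite in_line; apply/forallP => j; rewrite eqxx implybT. Qed.

Lemma line_trans x y w i : y \in line x i -> w \in line y i -> w \in line x i.
Proof.
rewrite !in_line => /forallP H1 /forallP H2; apply/forallP => j.
apply/implyP => ji; move/implyP: (H1 j) => /(_ ji)/eqP <-.
by move/implyP: (H2 j) => /(_ ji).
Qed.

Lemma upd_line x i v : upd x i v \in line x i.
Proof.
rewrite in_line; apply/forallP => j; apply/implyP => ji.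
by rewrite ffunE (negbTE ji).
Qed.

Lemma upd_same x i : upd x i (x i) = x.
Proof. by apply/ffunP => j; rewrite ffunE; case: eqP => // ->. Qed.

Lemma updE x i v j : upd x i v j = if j == i then v else x j.
Proof. by rewrite ffunE. Qed.

Lemma upd_at x i v : upd x i v i = v.
Proof. by rewrite ffunE eqxx. Qed.

Lemma upd_upd x i v v' : upd (upd x i v) i v' = upd x i v'.
Proof. by apply/ffunP => j; rewrite !ffunE; case: eqP. Qed.

Lemma upd_comm x i j v t : i != j -> upd (upd x i v) j t = upd (upd x j t) i v.
Proof.
move=> ij; apply/ffunP => l; rewrite !ffunE.
case: (eqVneq l j) => [lj|lj]; case: (eqVneq l i) => [li|li] //.
by rewrite -li lj eqxx in ij.
Qed.

Lemma line_upd x i y : y \in line x i -> y = upd x i (y i).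
Proof.
rewrite in_line => /forallP H; apply/ffunP => j; rewrite ffunE.
case: eqP => [->//|/eqP ji]; by move/implyP: (H j) => /(_ ji)/eqP.
Qed.

Lemma line_upd_eq x i v : line (upd x i v) i = line x i.
Proof.
apply/setP => y; apply/idP/idP => H.
  exact: line_trans (upd_line x i v) H.
by apply: line_trans H; rewrite line_sym upd_line.
Qed.

Lemma upd_inj x i : injective (upd x i).
Proof. by move=> v v' /(congr1 (fun y : word m => y i)); rewrite !upd_at. Qed.

Lemma card_line x i (P : {set word m}) :
  #|line x i :&: P| = #|[pred v | upd x i v \in P]|.
Proof.
have -> : line x i :&: P = upd x i @: [set v | upd x i v \in P].
  apply/setP => y; rewrite inE; apply/andP/imsetP => [[yl yP]|[v]].
    by exists (y i); rewrite ?inE -line_upd.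
  by rewrite inE => vP ->; split=> //; apply: upd_line.
by rewrite card_imset; [apply: eq_card => v; rewrite inE | apply: upd_inj].
Qed.

Lemma dMDS_card D x i : double_MDS_code D -> #|[pred v | upd x i v \in D]| = 2.
Proof. by move=> HD; rewrite -card_line. Qed.

Lemma card2_eq (P : {pred 'I_4}) s1 s2 c :
  #|P| = 2 -> s1 \in P -> s2 \in P -> s1 != s2 -> (c \in P) = (c == s1) || (c == s2).
Proof.
move=> HP H1 H2 H12.
have E : #|[set s1; s2]| = #|P| by rewrite cards2 H12 HP.
have /(subset_cardP E) EQ : [set s1; s2] \subset P.
  by apply/subsetP => z; rewrite !inE => /orP[]/eqP ->.
by rewrite -EQ !inE.
Qed.

Lemma card2_other (P : {pred 'I_4}) s : #|P| = 2 -> s \in P -> exists2 t, t \in P & t != s.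
Proof.
move=> HP Hs; have: 1 < #|P| by rewrite HP.
case/card_gt1P => [u [v [uP vP uv]]].
case: (eqVneq u s) => [us|us]; last by exists u.
by exists v => //; rewrite -us eq_sym.
Qed.

Lemma fourth (s0 s1 s2 : 'I_4) : exists s3 : 'I_4, [&& s3 != s0, s3 != s1 & s3 != s2].
Proof.
have : #|[predU pred1 s0 & [predU pred1 s1 & pred1 s2]]| < #|'I_4|.
  rewrite card_ord; apply: (@leq_ltn_trans (size [:: s0; s1; s2])) => //.
  apply: leq_trans (card_size _); apply: subset_leq_card; apply/subsetP => z.
  by rewrite !inE.
move=> H; have [s3 Hs3] : exists s3, s3 \notin [predU pred1 s0 & [predU pred1 s1 & pred1 s2]].
  apply/existsP; apply: contraTT H; rewrite negb_exists => /forallP Hall.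
  rewrite -leqNgt; apply: subset_leq_card; apply/subsetP => z _.
  by move: (Hall z); rewrite negbK.
by exists s3; move: Hs3; rewrite !inE !negb_or.
Qed.

Definition adjw D : rel (word m) :=
  fun x y => [&& x \in D, y \in D & [exists i, y \in line x i]].
Definition connected D := forall x y, x \in D -> y \in D -> connect (adjw D) x y.

Lemma adjw_sym D : symmetric (adjw D).
Proof.
move=> x y; rewrite /adjw andbCA; congr [&& _, _ & _].
by apply/existsP/existsP => -[i Hi]; exists i; rewrite line_sym.
Qed.

Lemma adjwI D x y i : x \in D -> y \in D -> y \in line x i -> adjw D x y.
Proof. by move=> xD yD yl; rewrite /adjw xD yD; apply/existsP; exists i. Qed.

Lemma closed_dcode D (E : {set word m}) : double_MDS_code D -> E \subset D ->
  (forall w w' i, w \in D -> w' \in D -> w' \in line w i -> (w \in E) = (w' \in E)) ->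
  double_code E.
Proof.
move=> HD ED Hcl x i.
case: (set_0Vmem (line x i :&: E)) => [->|[w]]; first by rewrite cards0; left.
rewrite inE => /andP[wl wE]; right; transitivity #|line x i :&: D|; last exact: HD x i.
apply: eq_card => z; rewrite !in_setI; case zl : (z \in line x i) => //=.
have wD : w \in D by apply: (subsetP ED).
apply/idP/idP => [zE|zD]; first exact: (subsetP ED).
rewrite -(Hcl w z i wD zD) //; apply: line_trans (_ : x \in line w i) zl.
by rewrite line_sym.
Qed.

Lemma prime_connected D : double_MDS_code D -> prime_code D -> connected D.
Proof.
move=> HD [_ _ Hno] x y xD yD; apply/negPn/negP => Nc; apply: Hno.
have [C HC] : exists C : {set word m}, forall w, (w \in C) = (w \in D) && connect (adjw D) x w.
  by exists [set w in D | connect (adjw D) x w] => w; rewrite inE.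
have CD : C \subset D by apply/subsetP => w; rewrite HC => /andP[].
have Hcl : forall w w' i, w \in D -> w' \in D -> w' \in line w i -> (w \in C) = (w' \in C).
  move=> w w' i wD w'D wl; rewrite !HC wD w'D /=.
  have Hww : adjw D w w' by apply: adjwI wl.
  apply/idP/idP => H; first exact: connect_trans H (connect1 Hww).
  apply: connect_trans H (connect1 _); by rewrite adjw_sym.
have xC : x \in C by rewrite HC xD connect0.
have yC : y \notin C by rewrite HC yD.
have yDC : y \in D :\: C by rewrite in_setD yC yD.
have xDC : x \notin D :\: C by rewrite in_setD xC.
have CE : C != D :\: C.
  by apply/eqP => E; move: xDC; rewrite -E xC.
exists [set C; D :\: C]; split.
- rewrite /partition; apply/and3P; split.
  + apply/eqP/setP => z; apply/bigcupP/idP => [[B]|zD].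
      rewrite in_set2 => /orP[]/eqP -> zB; first exact: (subsetP CD).
      by move: zB; rewrite in_setD => /andP[].
    case zC: (z \in C); first by exists C; rewrite ?in_set2 ?eqxx ?zC.
    by exists (D :\: C); rewrite ?in_set2 ?eqxx ?orbT // in_setD zC zD.
  + apply/trivIsetP => A B; rewrite !in_set2 => /orP[]/eqP -> /orP[]/eqP -> //;
      rewrite ?eqxx // => _; rewrite ?(disjoint_sym (D :\: C)); rewrite disjoint_subset;
      by apply/subsetP => z zC; rewrite !inE zC.
  + rewrite in_set2 negb_or; apply/andP; split; apply/eqP => E.
      by move: xC; rewrite -E inE.
    by move: yDC; rewrite -E inE.
- by rewrite cards2 CE.
- move=> B; rewrite in_set2 => /orP[]/eqP ->; split.
  + by apply/set0Pn; exists x.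
  + exact: closed_dcode HD CD Hcl.
  + by apply/set0Pn; exists y.
  + apply: closed_dcode HD _ _; first by apply/subsetP => z; rewrite in_setD => /andP[].
    by move=> w w' i wD w'D wl; rewrite !in_setD wD w'D (Hcl w w' i).
Qed.

Lemma adjN D u v l : u \notin D -> v \notin D -> v \in line u l -> adjw (~: D) u v.
Proof. by move=> uD vD; apply: adjwI; rewrite in_setC. Qed.

Lemma compl_step D x x' i j0 (C1 : {set word m}) :
  double_MDS_code D -> (forall u v, u \in C1 -> adjw (~: D) u v -> v \in C1) ->
  x \in D -> x' \in D -> x' \in line x i ->
  (exists2 w, w \in line x j0 & w \in C1) -> C1 \subset ~: D ->
  exists2 w, w \in line x' j0 & w \in C1.
Proof.
move=> HD HC1 xD x'D xl [w wl wC] C1N.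
have wN : w \notin D by rewrite -in_setC; apply: (subsetP C1N).
have Hst : forall u v l, u \in C1 -> v \notin D -> v \in line u l -> v \in C1.
  move=> u v l uC vN vl; have uN : u \notin D by rewrite -in_setC; exact: (subsetP C1N).
  exact: HC1 uC (adjN uN vN vl).
case: (eqVneq i j0) => [ij|ij].
  by exists w => //; apply: (@line_trans x' x w j0) => //; rewrite line_sym -ij.
pose phi s t := upd (upd x i s) j0 t.
have rowadj : forall s t t', phi s t' \in line (phi s t) j0.
  by move=> s t t'; rewrite /phi -(upd_upd (upd x i s) j0 t t') upd_line.
have phiC : forall s t, phi s t = upd (upd x j0 t) i s.
  by move=> s t; rewrite /phi upd_comm.
have coladj : forall s s' t, phi s' t \in line (phi s t) i.
  by move=> s s' t; rewrite !phiC -(upd_upd (upd x j0 t) i s s') upd_line.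
have Rc : forall s, #|[pred t | phi s t \in D]| = 2.
  by move=> s; apply: dMDS_card.
have Cc : forall t, #|[pred s | phi s t \in D]| = 2.
  move=> t; transitivity #|[pred s | upd (upd x j0 t) i s \in D]|; last exact: dMDS_card.
  by apply: eq_card => s; rewrite !inE phiC.
pose s0 := x i; pose s1 := x' i; pose t0 := x j0; pose p := w j0.
have ex : x = phi s0 t0 by rewrite /phi /s0 /t0 !upd_same.
have ex' : x' = phi s1 t0.
  rewrite /phi /s1 /t0.
  have -> : x j0 = upd x i (x' i) j0 by rewrite updE (negbTE (_ : j0 != i)) // eq_sym.
  by rewrite upd_same; exact: line_upd xl.
have ew : w = phi s0 p by rewrite /phi /s0 /p upd_same -line_upd.
case: (eqVneq s0 s1) => [e01|n01].
  by exists w => //; rewrite ex' -e01 -ex.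
have Cstep : forall s t s' t', phi s t \in C1 -> phi s' t' \notin D ->
    (s == s') || (t == t') -> phi s' t' \in C1.
  move=> s t s' t' Hc Hn /orP[]/eqP E.
    by subst s'; exact: Hst Hc Hn (rowadj _ _ _).
  by subst t'; exact: Hst Hc Hn (coladj _ _ _).
have Pc : phi s0 p \in C1 by rewrite -ew.
have Pn : phi s0 p \notin D by rewrite -ew.
have x'row : forall q, phi s1 q \in line x' j0 by move=> q; rewrite ex'.
case E1p : (phi s1 p \in D); last first.
  exists (phi s1 p) => //; apply: Cstep Pc _ _; by rewrite ?E1p ?eqxx ?orbT.
have s1in : s1 \in [pred s | phi s p \in D] by rewrite inE.
have [s2 s2in s21] := card2_other (Cc p) s1in.
have s2D := s2in; rewrite inE in s2D.
have s20 : s2 != s0 by apply: contraNneq Pn => <-.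
have [s3 /and3P[s30 s31 s32]] := fourth s0 s1 s2.
have P3 : phi s3 p \notin D.
  have := card2_eq s3 (Cc p) s1in s2in; rewrite eq_sym s21 inE (negbTE s31) (negbTE s32).
  by move=> ->.
have t0p : t0 != p by apply: contraNneq Pn => <-; rewrite -ex.
have C0t : forall s, s != s0 -> s != s1 -> phi s t0 \notin D.
  move=> s ss0 ss1.
  have h0 : s0 \in [pred s | phi s t0 \in D] by rewrite inE -ex.
  have h1 : s1 \in [pred s | phi s t0 \in D] by rewrite inE -ex'.
  have := card2_eq s (Cc t0) h0 h1; rewrite n01 inE (negbTE ss0) (negbTE ss1).
  by move=> ->.
have R2c : #|[predC [pred t | phi s2 t \in D]]| = 2.
  by have := cardC [pred t | phi s2 t \in D]; rewrite Rc card_ord => /(congr1 (subn^~ 2)); rewrite addKn.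
have t0in : t0 \in [predC [pred t | phi s2 t \in D]] by rewrite !inE C0t // eq_sym.
have [q1 q1in q1t0] := card2_other R2c t0in.
move: q1in; rewrite !inE => q1N.
have q1p : q1 != p by apply: contraNneq q1N => ->.
have Q1 : phi s1 q1 \notin D.
  have h0 : t0 \in [pred t | phi s1 t \in D] by rewrite inE -ex'.
  have h1 : p \in [pred t | phi s1 t \in D] by rewrite inE E1p.
  have := card2_eq q1 (Rc s1) h0 h1; rewrite t0p inE (negbTE q1t0) (negbTE q1p).
  by move=> ->.
exists (phi s1 q1) => //.
have H1 : phi s3 p \in C1 by apply: Cstep Pc P3 _; rewrite eqxx orbT.
have H2 : phi s3 t0 \in C1 by apply: Cstep H1 (C0t _ s30 s31) _; rewrite eqxx.
have H3 : phi s2 t0 \in C1 by apply: Cstep H2 (C0t _ s20 s21) _; rewrite eqxx orbT.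
have H4 : phi s2 q1 \in C1 by apply: Cstep H3 q1N _; rewrite eqxx.
by apply: Cstep H4 Q1 _; rewrite eqxx orbT.
Qed.

Lemma compl_connected D : double_MDS_code D -> connected D -> connected (~: D).
Proof.
move=> HD cD y y' yN y'N; apply/negPn/negP => Nc.
case: (eqVneq y y') => [e|nyy]; first by rewrite e connect0 in Nc.
have [j0 _] : exists j0 : 'I_m, y j0 != y' j0.
  apply/existsP; rewrite -negb_forall; apply: contra nyy => /forallP H.
  by apply/eqP/ffunP => i; apply/eqP.
have [C1 HC] : exists C1 : {set word m}, forall w,
    (w \in C1) = (w \in ~: D) && connect (adjw (~: D)) y w.
  by exists [set w | (w \in ~: D) && connect (adjw (~: D)) y w] => w; rewrite inE.
have C1N : C1 \subset ~: D by apply/subsetP => w; rewrite HC => /andP[].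
have HC1 : forall u v, u \in C1 -> adjw (~: D) u v -> v \in C1.
  move=> u v; rewrite !HC => /andP[_ Hu] Huv.
  by move: (Huv) => /and3P[_ -> _]; apply: connect_trans Hu (connect1 Huv).
have step2 : forall p x, path (adjw D) x p -> x \in D ->
    (exists2 w, w \in line x j0 & w \in C1) ->
    exists2 w, w \in line (last x p) j0 & w \in C1.
  elim=> [|z p IH] x //= /andP[Hxz Hp] xD Hx.
  move: (Hxz) => /and3P[_ zD /existsP[i zl]].
  exact: IH Hp zD (compl_step HD HC1 xD zD zl Hx C1N).
have pickD : forall u, exists2 x, x \in line u j0 & x \in D.
  move=> u; have : 0 < #|line u j0 :&: D| by rewrite HD.
  by rewrite card_gt0 => /set0Pn[x]; rewrite inE => /andP[? ?]; exists x.
have [x xl xD] := pickD y.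
have [x' x'l x'D] := pickD y'.
have Tx : exists2 w, w \in line x j0 & w \in C1.
  by exists y; rewrite 1?line_sym // HC yN connect0.
have /connectP[p Hp Ex'] := cD x x' xD x'D.
have [w wl wC] := step2 p x Hp xD Tx; rewrite -Ex' in wl.
have : y' \in C1.
  have wN : w \in ~: D := subsetP C1N _ wC.
  have y'l : y' \in line w j0 by apply: (@line_trans w x' y' j0); rewrite line_sym.
  exact: HC1 wC (adjwI wN y'N y'l).
by rewrite HC y'N (negbTE Nc).
Qed.

Lemma qg_line (q : word m -> 'I_4) u u' i : quasigroup q ->
  u' \in line u i -> u' != u -> q u' != q u.
Proof.
move=> Hq ul nu; apply: contra nu => /eqP E.
have [f fK Kf] := Hq u i.
have := can_inj fK; rewrite /injective => Hinj.
rewrite (line_upd ul) -{2}(upd_same u i).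
have -> // : u' i = u i.
by apply: Hinj; rewrite /= upd_same -(line_upd ul).
Qed.

Lemma two_other (V : {set 'I_4}) (x y c : 'I_4) : #|V| = 2 -> x \in V -> y \in V -> c \in V ->
  x != y -> (c == y) = (c != x).
Proof.
move=> HV xV yV cV xy; have := card2_eq c HV xV yV xy; rewrite cV => /esym H.
case: (eqVneq c x) => [cx|cx] /=; last by move: H; rewrite (negbTE cx).
by apply/eqP => cy; rewrite -cx cy eqxx in xy.
Qed.

Lemma parity W (q q' : word m -> 'I_4) (V V' : {set 'I_4}) :
  connected W -> quasigroup q -> quasigroup q' -> #|V| = 2 -> #|V'| = 2 ->
  (forall u, u \in W -> q u \in V) -> (forall u, u \in W -> q' u \in V') ->
  forall u u', u \in W -> u' \in W -> (q u == q u') = (q' u == q' u').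
Proof.
move=> cW Hq Hq' HV HV' qV qV' u u' uW u'W.
have /connectP[p Hp ->] := cW u u' uW u'W.
suff H : forall p z, path (adjw W) z p -> z \in W -> (q u == q z) = (q' u == q' z) ->
    (q u == q (last z p)) = (q' u == q' (last z p)).
  by apply: H Hp uW _; rewrite !eqxx.
elim=> [|z p1 IH] x //= /andP[Hxz Hp1] xW Hx.
move: (Hxz) => /and3P[_ zW /existsP[i zl]].
apply (IH _ Hp1 zW).
case: (eqVneq z x) => [->//|zx].
have n1 := qg_line Hq zl zx; have n2 := qg_line Hq' zl zx.
rewrite (two_other HV (qV _ xW) (qV _ zW) (qV _ uW)); last by rewrite eq_sym.
rewrite (two_other HV' (qV' _ xW) (qV' _ zW) (qV' _ uW)); last by rewrite eq_sym.
by rewrite Hx.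
Qed.
End Lines.

Section Unr.
Variable n : nat.

Definition unr (C : {set 'I_n}) (w : word #|C|) : word n :=
  [ffun i => match (insub (index i (enum C)) : option 'I_#|C|) with
             | Some l => w l | None => ord0 end].
Arguments unr : clear implicits.

Lemma index_enum_val (C : {set 'I_n}) (l : 'I_#|C|) : index (enum_val l) (enum C) = l.
Proof.
rewrite (enum_val_nth (enum_val l)) index_uniq ?enum_uniq //.
by rewrite -cardE ltn_ord.
Qed.

Lemma unr_val (C : {set 'I_n}) (w : word #|C|) (l : 'I_#|C|) : unr C w (enum_val l) = w l.
Proof. by rewrite ffunE index_enum_val valK. Qed.

Lemma unr_out (C : {set 'I_n}) (w : word #|C|) i : i \notin C -> unr C w i = ord0.
Proof.
move=> iC; rewrite ffunE insubF //.
by rewrite memNindex ?mem_enum // -cardE ltnn.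
Qed.

Lemma in_enum_val (C : {set 'I_n}) i : i \in C -> exists l : 'I_#|C|, i = enum_val l.
Proof. by move=> iC; exists (enum_rank_in iC i); rewrite enum_rankK_in. Qed.

Lemma restrict_unr (C : {set 'I_n}) (w : word #|C|) : restrict C (unr C w) = w.
Proof. by apply/ffunP => l; rewrite ffunE unr_val. Qed.

Lemma unr_restrict (C : {set 'I_n}) (x : word n) i : i \in C -> unr C (restrict C x) i = x i.
Proof. by case/in_enum_val => l ->; rewrite unr_val ffunE. Qed.

Lemma unr_upd (C : {set 'I_n}) (w : word #|C|) l v : unr C (upd w l v) = upd (unr C w) (enum_val l) v.
Proof.
apply/ffunP => i; rewrite [RHS]ffunE.
case iC: (i \in C).
  case/in_enum_val: iC => l' ->; rewrite !unr_val ffunE (inj_eq enum_val_inj) //.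
have -> : (i == enum_val l) = false.
  by apply/negbTE; apply: contraFneq iC => ->; apply: enum_valP.
by rewrite !unr_out ?iC.
Qed.
End Unr.
Arguments unr {n} C w.

Lemma lift0F m (l : 'I_m) : (lift ord0 l == ord0 :> 'I_m.+1) = false.
Proof. by apply/negbTE; rewrite eq_sym neq_lift. Qed.

Section PartA.
Variables (n : nat) (g : word n -> 'I_4) (a b : 'I_4) (k : nat)
  (K : 'I_k -> {set 'I_n}) (Sj : forall j : 'I_k, {set word #|K j|}) (s0 : bool).
Hypothesis Hq : quasigroup g.
Hypothesis Hab : a != b.
Hypothesis Hcan : canonical_rep [set x : word n | g x \in [set a; b]] K Sj s0.
Variables (j0 j1 : 'I_k).
Hypothesis HA2 : 1 < #|K j0|.
Hypothesis Hj10 : j1 != j0.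

Implicit Types (X z x : word n).
Let A := K j0.
Let D := Sj j0.

Definition merge (X z : word n) : word n := [ffun i => if i \in A then X i else z i].
Definition beta (z : word n) : bool :=
  \big[addb/false]_(j | j != j0) (restrict (K j) z \in Sj j) (+) s0.

Lemma Hpart : set_partition K.
Proof. by case: Hcan. Qed.

Lemma disjK j j' i : j != j' -> i \in K j -> (i \in K j') = false.
Proof. case: Hpart => _ Hd _ jj' iK; exact: disjointFr (Hd _ _ jj') iK. Qed.

Lemma restrict_merge X z : restrict A (merge X z) = restrict A X.
Proof. by apply/ffunP => l; rewrite !ffunE (enum_valP l). Qed.

Lemma restrict_mergeN j X z : j != j0 -> restrict (K j) (merge X z) = restrict (K j) z.
Proof.
move=> jj0; apply/ffunP => l; rewrite !ffunE.
by rewrite /A (disjK jj0 (enum_valP l)).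
Qed.

Lemma memS X z : (g (merge X z) \in [set a; b]) = (restrict A X \in D) (+) beta z.
Proof.
case: Hcan => _ _ _ /(_ (merge X z)); rewrite inE => ->.
rewrite (bigD1 j0) //= restrict_merge /beta addbA; congr (_ (+) _ (+) _).
by apply: eq_bigr => j jj0; rewrite restrict_mergeN.
Qed.

Lemma merge_upd X z i v : i \in A -> merge (upd X i v) z = upd (merge X z) i v.
Proof.
move=> iA; apply/ffunP => j; rewrite !ffunE.
by case: (eqVneq j i) => [->|]; rewrite ?iA.
Qed.

Lemma merge_updN X z i v : i \notin A -> merge X (upd z i v) = upd (merge X z) i v.
Proof.
move=> iA; apply/ffunP => j; rewrite !ffunE.
by case: (eqVneq j i) => [->|]; rewrite ?(negbTE iA).
Qed.

Lemma merge_xx x : merge x x = x.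
Proof. by apply/ffunP => j; rewrite !ffunE; case: ifP. Qed.

Lemma merge_eqA X (X' : word n) z : {in A, X =1 X'} -> merge X z = merge X' z.
Proof. by move=> H; apply/ffunP => j; rewrite !ffunE; case: ifP => // /H. Qed.

Lemma merge_eqN X z (z' : word n) : (forall i, i \notin A -> z i = z' i) -> merge X z = merge X z'.
Proof. by move=> H; apply/ffunP => j; rewrite !ffunE; case: ifP => // /negbT /H. Qed.

Definition zw : word n := [ffun => ord0].
Definition G (z : word n) (u : word #|A|) : 'I_4 := g (merge (unr A u) z).

Lemma qG z : quasigroup (G z).
Proof.
move=> u l; apply: (eq_bij (Hq (merge (unr A u) z) (enum_val l))) => v /=.
by rewrite /G unr_upd merge_upd // enum_valP.
Qed.

Lemma GS z u : (G z u \in [set a; b]) = (u \in D) (+) beta z.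
Proof. by rewrite /G memS restrict_unr. Qed.

Definition Vset (bit : bool) : {set 'I_4} := [set c | (c \in [set a; b]) == bit].

Lemma card_Vset bit : #|Vset bit| = 2.
Proof.
case: bit.
  transitivity #|[set a; b]|; last by rewrite cards2 Hab.
  by apply: eq_card => c; rewrite !inE eqb_id.
transitivity #|~: [set a; b]|.
  by apply: eq_card => c; rewrite !inE eqbF_neg.
have := cardsC [set a; b]; rewrite cards2 Hab card_ord.
by move=> /(congr1 (subn^~ 2)); rewrite addKn.
Qed.

Lemma keyG z u u' : (G z u == G z u') = (G zw u == G zw u').
Proof.
case: Hcan => _ _ /(_ j0) [HD Hp _] _.
have cD := prime_connected HD Hp.
have cN := compl_connected HD cD.
case uD: (u \in D); case u'D: (u' \in D).
- apply: (parity cD (qG z) (qG zw) (card_Vset (~~ beta z)) (card_Vset (~~ beta zw))) => // w wD;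
    by rewrite inE GS wD.
- have H : forall z, G z u != G z u'.
    by move=> z1; apply/eqP => E; have := GS z1 u; rewrite E GS uD u'D; case: (beta z1).
  by rewrite !(negbTE (H _)).
- have H : forall z, G z u != G z u'.
    by move=> z1; apply/eqP => E; have := GS z1 u; rewrite E GS uD u'D; case: (beta z1).
  by rewrite !(negbTE (H _)).
- apply: (parity cN (qG z) (qG zw) (card_Vset (beta z)) (card_Vset (beta zw)));
    rewrite ?in_setC ?uD ?u'D // => w; rewrite in_setC => /negbTE wD; by rewrite inE GS wD.
Qed.

Let B := ~: A.
Definition L (j : 'I_#|B|.+1) : {set 'I_n} :=
  if unlift ord0 j is Some l then [set enum_val l] else A.
Definition f (j : 'I_#|B|.+1) (w : word #|L j|) : 'I_4 :=
  if unlift ord0 j is Some l then unr (L j) w (enum_val l) else g (merge (unr (L j) w) zw).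
Arguments f : clear implicits.
Definition rep (c : 'I_4) : word n := odflt zw [pick X | g (merge X zw) == c].
Definition wB (w : word #|B|.+1) : word #|B| := [ffun l => w (lift ord0 l)].
Definition f0 (w : word #|B|.+1) : 'I_4 := g (merge (rep (w ord0)) (unr B (wB w))).

Lemma key2 X (X' : word n) z :
  (g (merge X z) == g (merge X' z)) = (g (merge X zw) == g (merge X' zw)).
Proof.
have gm : forall Y z1, g (merge Y z1) = G z1 (restrict A Y).
  by move=> Y z1; rewrite /G; congr g; apply: merge_eqA => i iA; rewrite unr_restrict.
by rewrite !gm keyG.
Qed.

Lemma A_nonempty : exists a0, a0 \in A.
Proof. by apply/set0Pn; rewrite -card_gt0; apply: ltnW. Qed.

Lemma rep_spec c : g (merge (rep c) zw) = c.
Proof.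
have [a0 a0A] := A_nonempty.
have [fi fK Kf] := Hq (merge zw zw) a0.
have HX : g (merge (upd zw a0 (fi c)) zw) = c by rewrite merge_upd // Kf.
rewrite /rep; case: pickP => [X /eqP //|H].
by have := H (upd zw a0 (fi c)); rewrite HX eqxx.
Qed.

Lemma B_nonempty : 0 < #|B|.
Proof.
case: Hpart => Hne _ _; have [i1 i1K] := set0Pn _ (Hne j1).
rewrite card_gt0; apply/set0Pn; exists i1; rewrite in_setC.
by rewrite /A (disjK Hj10 i1K).
Qed.

Lemma reducible_g : reducible g.
Proof.
exists #|B|.+1, L, f0, f; split.
- have := cardsC A; rewrite card_ord -/B => HAB.
  have := B_nonempty; move: HA2; rewrite -/A => H1 H2.
  apply/andP; split; first by [].
  lia.
- split.
  + move=> j; rewrite /L; case: (unliftP ord0 j) => [l _|_].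
      by apply/set0Pn; exists (enum_val l); rewrite inE.
    by apply/set0Pn; apply: A_nonempty.
  + move=> ja jb; rewrite /L.
    case: (unliftP ord0 ja) => [la ->|->]; case: (unliftP ord0 jb) => [lb ->|->].
    * rewrite (inj_eq lift_inj) => lab; rewrite disjoints1 in_set1.
      by rewrite (inj_eq enum_val_inj).
    * move=> _; rewrite disjoints1; have := enum_valP la; by rewrite in_setC.
    * move=> _; rewrite disjoint_sym disjoints1; have := enum_valP lb; by rewrite in_setC.
    * by rewrite eqxx.
  + move=> i; case iA: (i \in A).
      by exists ord0; rewrite /L unlift_none.
    have iB : i \in B by rewrite in_setC iA.
    by exists (lift ord0 (enum_rank_in iB i)); rewrite /L liftK enum_rankK_in // in_set1.
- move=> w idx; case: (unliftP ord0 idx) => [l ->|->].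
  + have E : forall v, f0 (upd w (lift ord0 l) v) =
        g (upd (merge (rep (w ord0)) (unr B (wB w))) (enum_val l) v).
      move=> v; rewrite /f0 updE eq_sym lift0F.
      have -> : wB (upd w (lift ord0 l) v) = upd (wB w) l v.
        by apply/ffunP => l'; rewrite !ffunE (inj_eq lift_inj).
      rewrite unr_upd merge_updN //; have := enum_valP l; by rewrite in_setC.
    by apply: (eq_bij (Hq _ (enum_val l))) => v /=; rewrite E.
  + apply: injF_bij => v v'; rewrite /f0 !upd_at.
    have HwB : forall v1, wB (upd w ord0 v1) = wB w.
      by move=> v1; apply/ffunP => l'; rewrite !ffunE lift0F.
    by rewrite !HwB; move/eqP; rewrite key2 !rep_spec => /eqP.
- move=> j; case: (unliftP ord0 j) => [l ->|->] w idx.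
  + have Le : L (lift ord0 l) = [set enum_val l] by rewrite /L liftK.
    have Hi : enum_val idx \in [set enum_val l] by rewrite -Le; exact: enum_valP.
    rewrite in_set1 in Hi.
    have E : forall v, f (lift ord0 l) (upd w idx v) = v.
      by move=> v; rewrite /f liftK unr_upd updE eq_sym Hi.
    by exists id => v /=; rewrite E.
  + have Le : L ord0 = A by rewrite /L unlift_none.
    have Hi : enum_val idx \in A by rewrite -Le; exact: enum_valP.
    apply: (eq_bij (Hq (merge (unr (L ord0) w) zw) (enum_val idx))) => v /=.
    by rewrite /f unlift_none unr_upd merge_upd.
- move=> x; set W := [ffun j => f j (restrict (L j) x)].
  have W0 : W ord0 = g (merge x zw).
    rewrite /W ffunE /f unlift_none; congr g; apply: merge_eqA => i iA.
    by rewrite unr_restrict // /L unlift_none.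
  have WB : forall l, wB W l = x (enum_val l).
    move=> l; rewrite /wB ffunE /W ffunE /f liftK unr_restrict //.
    by rewrite /L liftK in_set1.
  rewrite /f0 W0.
  have -> : merge (rep (g (merge x zw))) (unr B (wB W)) = merge (rep (g (merge x zw))) x.
    apply: merge_eqN => i iA; have iB : i \in B by rewrite in_setC.
    by case/in_enum_val: iB => l ->; rewrite unr_val WB.
  have := key2 (rep (g (merge x zw))) x x; rewrite rep_spec eqxx merge_xx.
  by move/eqP.
Qed.
End PartA.

Section Blocks.
Variables (n k : nat) (K : 'I_k -> {set 'I_n}).
Hypothesis HK : set_partition K.

Definition blk (i : 'I_n) : 'I_k :=
  xchoose (let: And3 _ _ Hc := HK in Hc i : exists j, i \in K j).

Lemma blk_in i : i \in K (blk i).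
Proof. rewrite /blk; case: HK => _ _ Hc; exact: (xchooseP (Hc i)). Qed.

Lemma blk_uniq i j : i \in K j -> blk i = j.
Proof.
move=> iK; apply/eqP; apply/negPn/negP => ne.
case: HK => _ Hd _; have := disjointFr (Hd _ _ ne) (blk_in i); by rewrite iK.
Qed.

Lemma blocks_le : (forall j, #|K j| <= 1) -> n <= k.
Proof.
move=> H1; have Hinj : injective blk.
  move=> i i' E; have /card_le1_eqP H := H1 (blk i).
  have Hi := blk_in i; have Hi' := blk_in i'; rewrite -E in Hi'.
  exact: esym (H _ _ Hi Hi').
by have := leq_card _ Hinj; rewrite !card_ord.
Qed.
End Blocks.

Lemma card_xor (P : pred 'I_4) c : #|P| = 2 -> #|[pred t | P t (+) c]| = 2.
Proof.
case: c => HP; last by transitivity #|P|; [apply: eq_card => t; rewrite !inE addbF | exact: HP].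
have := cardC P; rewrite HP card_ord => H.
transitivity #|[predC P]|; first by apply: eq_card => t; rewrite !inE addbT.
by apply/eqP; rewrite -(eqn_add2l 2) H.
Qed.

Lemma ord1_eq N (l l' : 'I_N) : N = 1 -> l = l'.
Proof. move=> EN; apply: ord_inj; have := ltn_ord l; have := ltn_ord l'; lia. Qed.

Section PartB.
Variables (n : nat) (g : word n -> 'I_4) (a b : 'I_4)
  (K : 'I_n -> {set 'I_n}) (Sj : forall j : 'I_n, {set word #|K j|}) (s0 : bool).
Hypothesis Hq : quasigroup g.
Hypothesis Hab : a != b.
Hypothesis Hcan : canonical_rep [set x : word n | g x \in [set a; b]] K Sj s0.

Lemma HKb : set_partition K. Proof. by case: Hcan. Qed.

Let bl := blk HKb.

Lemma bl_inj : injective bl.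
Proof.
have Hr : forall j, exists i, i \in K j.
  by move=> j; case: HKb => Hne _ _; apply/set0Pn; exact: Hne.
pose r j := xchoose (Hr j).
have rK : cancel r bl by move=> j; apply: blk_uniq; exact: (xchooseP (Hr j)).
have [r' rr' r'r] := injF_bij (can_inj rK).
have E : bl =1 r' by move=> i; rewrite -{1}(r'r i) rK.
by move=> i i'; rewrite !E; apply: (can_inj r'r).
Qed.

Lemma bl_single i e : e \in K (bl i) -> e = i.
Proof. by move=> eK; apply: bl_inj; rewrite /bl (blk_uniq HKb eK). Qed.

Definition chi (i : 'I_n) (v : 'I_4) : bool :=
  restrict (K (bl i)) [ffun => v] \in Sj (bl i).

Lemma restrict_bl i x : restrict (K (bl i)) x = restrict (K (bl i)) [ffun => x i].
Proof. by apply/ffunP => l; rewrite !ffunE (bl_single (enum_valP l)). Qed.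

Lemma sumS x : (x \in [set x : word n | g x \in [set a; b]]) =
  \big[addb/false]_(i < n) chi i (x i) (+) s0.
Proof.
case: Hcan => _ _ _ ->; congr (_ (+) _).
rewrite (reindex_inj bl_inj); apply: eq_bigr => i _.
by rewrite /chi -restrict_bl.
Qed.

Lemma card_chi i : #|[pred v | chi i v]| = 2.
Proof.
case: Hcan => _ _ /(_ (bl i)) [HD _ _] _.
have c1 : #|K (bl i)| = 1.
  apply/eqP; rewrite eqn_leq; apply/andP; split.
    by apply/card_le1_eqP => e e' /bl_single -> /bl_single ->.
  by rewrite card_gt0; apply/set0Pn; exists i; exact: (blk_in HKb).
have l0 : 'I_#|K (bl i)| by rewrite c1; exact: ord0.
have Hall : forall l : 'I_#|K (bl i)|, l = l0.
  by move=> l; exact: (ord1_eq l l0 c1).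
transitivity #|[pred v | upd [ffun => ord0] l0 v \in Sj (bl i)]|; last exact: dMDS_card.
apply: eq_card => v; rewrite !inE /chi.
suff -> : restrict (K (bl i)) [ffun => v] = upd [ffun => ord0] l0 v by [].
by apply/ffunP => l; rewrite !ffunE (Hall l) eqxx.
Qed.

Definition chi' (i : 'I_n.+1) (v : 'I_4) : bool :=
  if unlift ord_max i is Some i' then chi i' v else (v \in [set a; b]) (+) s0 (+) true.
Definition Dl : {set word n.+1} := [set y : word n.+1 | \big[addb/false]_(i < n.+1) chi' i (y i)].
Definition init (y : word n.+1) : word n := [ffun i => y (widen_ord (leqnSn n) i)].

Lemma widen_lift (i : 'I_n) : widen_ord (leqnSn n) i = lift ord_max i.
Proof. by apply: ord_inj; rewrite lift_max. Qed.

Lemma unlift_widen (i : 'I_n) : unlift ord_max (widen_ord (leqnSn n) i) = Some i.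
Proof. by rewrite widen_lift liftK. Qed.

Lemma ext_w (x : word n) v i : ext x v (widen_ord (leqnSn n) i) = x i.
Proof. by rewrite ffunE unlift_widen. Qed.

Lemma ext_max (x : word n) v : ext x v ord_max = v.
Proof. by rewrite ffunE unlift_none. Qed.

Lemma init_ext (x : word n) v : init (ext x v) = x.
Proof. by apply/ffunP => i; rewrite ffunE ext_w. Qed.

Lemma ext_init (y : word n.+1) : ext (init y) (y ord_max) = y.
Proof.
apply/ffunP => i; rewrite ffunE; case: (unliftP ord_max i) => [i' ->|->] //.
by rewrite ffunE widen_lift.
Qed.

Let C := [set ext x (g x) | x : word n].

Lemma inC y : (y \in C) = (y ord_max == g (init y)).
Proof.
apply/imsetP/eqP => [[x _ ->]|E]; first by rewrite ext_max init_ext.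
by exists (init y) => //; rewrite -E ext_init.
Qed.

Lemma card_chi' i : #|[pred v | chi' i v]| = 2.
Proof.
rewrite /chi'; case: (unliftP ord_max i) => [i' _|_]; first exact: card_chi.
apply: card_xor; apply: card_xor.
transitivity #|[set a; b]|; last by rewrite cards2 Hab.
by apply: eq_card => v; rewrite !inE.
Qed.

Lemma Dl_dMDS : double_MDS_code Dl.
Proof.
move=> y i; rewrite card_line.
transitivity #|[pred t | chi' i t (+) \big[addb/false]_(l | l != i) chi' l (y l)]|.
  apply: eq_card => t; rewrite !inE (bigD1 i) //= upd_at; congr (_ (+) _).
  by apply: eq_bigr => l li; rewrite updE (negbTE li).
apply: etrans (card_xor (\big[addb/false]_(l | l != i) chi' l (y l)) (card_chi' i)).
by apply: eq_card => t; rewrite !inE.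
Qed.

Lemma C_MDS : MDS_code C.
Proof.
move=> y i; rewrite card_line.
case: (unliftP ord_max i) => [i' ->|->].
  have [fi fK Kf] := Hq (init y) i'.
  transitivity #|pred1 (fi (y ord_max))|; last exact: card1.
  apply: eq_card => t; rewrite !inE inC updE eq_sym (negbTE (neq_lift _ _)).
  have -> : init (upd y (lift ord_max i') t) = upd (init y) i' t.
    apply/ffunP => j; rewrite !ffunE widen_lift (inj_eq lift_inj).
    by case: eqP => // ->.
  apply/eqP/eqP => [<-|->]; first exact: (esym (fK t)).
  exact: (Kf (y ord_max)).
transitivity #|pred1 (g (init y))|; last exact: card1.
apply: eq_card => t; rewrite !inE inC upd_at.
have -> // : init (upd y ord_max t) = init y.
apply/ffunP => j; rewrite !ffunE widen_lift eq_sym (negbTE (neq_lift _ _)).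
by [].
Qed.

Lemma C_sub : C \subset Dl.
Proof.
apply/subsetP => y /imsetP[x _ ->]; rewrite inE big_ord_recr /=.
rewrite /chi' unlift_none ext_max.
under eq_bigr => i _ do rewrite unlift_widen ext_w.
have := sumS x; rewrite inE => E.
have -> : \big[addb/false]_(i < n) chi i (x i) = (g x \in [set a; b]) (+) s0 by rewrite E addbK.
by case: (g x \in [set a; b]); case: s0.
Qed.

Lemma semilinear_g : semilinear g.
Proof.
split; first exact: C_MDS.
exists Dl; split; last exact: C_sub.
split; first exact: Dl_dMDS.
by exists chi' => y; rewrite inE.
Qed.
End PartB.

Unset Implicit Arguments.

Theorem corollary6 (n : nat) (g : word n -> 'I_4) (a b : 'I_4) (k : nat)
  (K : 'I_k -> {set 'I_n}) (Sj : forall j : 'I_k, {set word #|K j|}) (s0 : bool) :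
  quasigroup g -> a != b ->
  canonical_rep [set x : word n | g x \in [set a; b]] K Sj s0 ->
  ((1 < k < n)%N -> reducible g) /\ (k = n -> semilinear g).
Proof.
move=> Hq Hab Hcan; split.
- move=> /andP[k1 kn].
  have HK : set_partition K by case: Hcan.
  have [j0 Hj0] : exists j0, 1 < #|K j0|.
    case: (boolP [exists j0, 1 < #|K j0|]) => [/existsP //|/existsPn H]; exfalso.
    have Hle : forall j, #|K j| <= 1 by move=> j; rewrite leqNgt; exact: H j.
    have := blocks_le HK Hle; lia.
  have k0 : 0 < k by lia.
  have [j1 Hj1] : exists j1 : 'I_k, j1 != j0.
    case E: (j0 == Ordinal k0); last by exists (Ordinal k0); rewrite eq_sym E.
    by exists (Ordinal k1); rewrite (eqP E); apply/eqP => /(congr1 val).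
  by have := reducible_g Hq Hab Hcan Hj0 Hj1; apply.
- move=> Ekn; subst k.
  exact: semilinear_g Hq Hab Hcan.
Qed.
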